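(* Let $n\ge 3$ be odd and let $m \ge \frac{5n-1}{2}$. Then the permutations $(3,n)(2n-1,2n+1)$ and $(2,n+1)(2n,2n+2)$ in $S_m$ are each a product of $n$-crossing permutations over $S_m$.
   Context: For integers $2\le n\le m$ and $1 \le j \le m-n+1$, the $n$-crossing permutation $\pi_j\in S_m$ is $\pi_j=(j,\,j+n-1)(j+1,\,j+n-2)\cdots$, i.e. the involution sending $i \mapsto 2j+n-1-i$ for $j\le i\le j+n-1$ and fixing all other elements of $\{1,\dots,m\}$ (for odd $n$ the middle element $j+\frac{n-1}{2}$ is fixed). The $n$-crossing permutations over $S_m$ are $\pi_1,\dots,\pi_{m-n+1}$. *)

(* Defs.v *)
(* Points {1,...,m} are represented by 'I_m via i <-> (val i).+1. *)
From mathcomp Require Import all_boot all_fingroup.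
Unset Printing Implicit Defensive.

(* The n-crossing involution pi_j on 1-indexed points:
   i |-> 2j+n-1-i for j <= i <= j+n-1, identity otherwise. *)
Definition cross (n j x : nat) : nat :=
  if (j <= x) && (x <= j + n - 1) then 2 * j + n - 1 - x else x.

Definition is_crossing (m n : nat) (s : 'S_m) : Prop :=
  exists j : nat, 1 <= j /\ j <= m - n + 1 /\
    forall i : 'I_m, (s i).+1 = cross n j i.+1.

Definition prod_of_crossings (m n : nat) (g : 'S_m) : Prop :=
  exists l : seq 'S_m, (forall s, s \in l -> is_crossing m n s) /\
    g = (\prod_(s <- l) s)%g.

Definition swapn (a b x : nat) : nat :=
  if x == a then b else if x == b then a else x.

(* Main.v *)
Require Import Defs.
From mathcomp Require Import all_boot all_fingroup.
From mathcomp Require Import zify.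

Definition hfun (m : nat) (h : nat -> nat) (i : 'I_m) : 'I_m := insubd i (h i.+1).-1.

Definition hfun2 (m n j : nat) (i : 'I_m) : 'I_m :=
  if injectiveb (hfun m (cross n j)) then hfun m (cross n j) i else i.

Lemma hfun2_inj m n j : injective (hfun2 m n j).
Proof.
rewrite /hfun2; case: injectiveP => [H|_] a b /=; [exact: H | by []].
Qed.

Definition cp (m n j : nat) : 'S_m := perm (@hfun2_inj m n j).

Lemma crossP n j x : ((j <= x /\ x <= j + n - 1) /\ cross n j x = 2 * j + n - 1 - x)
  \/ ((x < j \/ j + n - 1 < x) /\ cross n j x = x).
Proof. rewrite /cross; case: andP => H; [left|right]; split => //; lia. Qed.

Lemma cross_range n j x : 1 <= j -> 1 <= x -> 1 <= cross n j x /\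
   (forall m, x <= m -> j + n - 1 <= m -> cross n j x <= m).
Proof. case: (crossP n j x) => [[H ->]|[H ->]]; split => //; lia. Qed.

Lemma cross_inv n j x : cross n j (cross n j x) = x.
Proof. rewrite {2}/cross; case: andP => H; rewrite /cross; case: andP => H'; lia. Qed.

Lemma hfun_val m n j i : 1 <= j -> j + n - 1 <= m ->
  (hfun m (cross n j) i).+1 = cross n j i.+1.
Proof.
move=> H1 H2; rewrite /hfun val_insubd.
have [A B] := cross_range n j i.+1 H1 (ltn0Sn _).
have := B m (ltn_ord i) H2.
case: ifP => H3 H4; lia.
Qed.

Lemma cpE m n j i : 1 <= j -> j + n - 1 <= m -> ((cp m n j) i).+1 = cross n j i.+1.
Proof.
move=> H1 H2; rewrite /cp permE /hfun2; case: injectiveP => [_|H].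
  by rewrite hfun_val.
exfalso; apply: H => a b E.
apply: val_inj; apply: succn_inj.
by rewrite -[a.+1](cross_inv n j) -[b.+1](cross_inv n j) -!hfun_val // E.
Qed.

Lemma prod_app m (l : seq 'S_m) i :
  (\prod_(s <- l) s)%g i = foldl (fun x (s : 'S_m) => s x) i l.
Proof.
elim: l i => [|a l IH] i; first by rewrite big_nil perm1.
by rewrite big_cons permM IH.
Qed.

Lemma word_app m n (w : seq nat) (i : 'I_m) :
  all (fun j => (1 <= j) && (j + n - 1 <= m)) w ->
  ((\prod_(s <- map (cp m n) w) s)%g i).+1 = foldl (fun x j => cross n j x) i.+1 w.
Proof.
rewrite prod_app; elim: w i => [|a w IH] i //= /andP [/andP [H1 H2] Hw].
by rewrite IH // cpE.
Qed.

Lemma word_prod m n (w : seq nat) (g : 'S_m) :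
  n <= m ->
  all (fun j => (1 <= j) && (j + n - 1 <= m)) w ->
  (forall i : 'I_m, (g i).+1 = foldl (fun x j => cross n j x) i.+1 w) ->
  prod_of_crossings m n g.
Proof.
move=> Hnm Hw Hg; exists (map (cp m n) w); split.
  move=> s /mapP [j Hj ->]; exists j.
  have /andP [H1 H2] := allP Hw j Hj.
  split; first by [].
  split; first by lia.
  by move=> i; rewrite cpE.
apply/permP => i; apply: val_inj; apply: succn_inj.
by rewrite word_app // Hg.
Qed.

Lemma swapnP a b x : (x = a /\ swapn a b x = b) \/ (x <> a /\ x = b /\ swapn a b x = a)
  \/ (x <> a /\ x <> b /\ swapn a b x = x).
Proof. rewrite /swapn; case: (x =P a) => H1; [left; lia|right]; case: (x =P b) => H2; lia. Qed.

Lemma crossP3 n j x : 1 <= n ->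
  (j <= x /\ x < j + n /\ cross n j x + x + 1 = 2 * j + n)
  \/ (x < j /\ cross n j x = x) \/ (j + n <= x /\ cross n j x = x).
Proof. move=> Hn; rewrite /cross; case: andP => H; lia. Qed.

Lemma swapnP3 a b x : (x = a /\ swapn a b x = b) \/ (x <> a /\ x = b /\ swapn a b x = a)
  \/ (x < a /\ x < b /\ swapn a b x = x) \/ (x < a /\ x > b /\ swapn a b x = x)
  \/ (x > a /\ x < b /\ swapn a b x = x) \/ (x > a /\ x > b /\ swapn a b x = x).
Proof. rewrite /swapn; case: (x =P a) => H1; [left; lia|right]; case: (x =P b) => H2; lia. Qed.

Ltac crush Hn :=
  repeat match goal with
  | |- context [cross ?n ?j ?x] =>
      lazymatch x with context [cross _ _ _] => fail | _ => idtac end;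
      let y := fresh "y" in
      move: (@crossP3 n j x Hn); move: (cross n j x) => y [[? [? ?]]|[[? ?]|[? ?]]]; try (exfalso; lia)
  | |- context [swapn ?a ?b ?x] =>
      lazymatch x with context [swapn _ _ _] => fail | _ => idtac end;
      let y := fresh "y" in
      move: (swapnP3 a b x); move: (swapn a b x) => y
        [[? ?]|[[? [? ?]]|[[? [? ?]]|[[? [? ?]]|[[? [? ?]]|[? [? ?]]]]]]]; try (exfalso; lia)
  end; lia.

Lemma case2 n p m : 3 <= n -> n = p + 1 -> 2 * n + 2 <= m -> forall x, 1 <= x <= m ->
  foldl (fun x j => cross n j x) x [:: 1; n; p; n; 1; n+2; n+3; n+2]
  = swapn 2 (n + 1) (swapn (2 * n) (2 * n + 2) x).
Proof. move=> H1 E H2 x Hx /=. have Hn : 1 <= n by lia. crush Hn. Qed.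

Lemma case1 t n m : 2 <= t -> n = 2 * t + 1 -> 5 * n - 1 <= 2 * m -> forall x, 1 <= x <= m ->
  foldl (fun x j => cross n j x) x [:: t+2; 3; n+2; 4; 5; 4; n+2; t+2]
  = swapn 3 n (swapn (2 * n - 1) (2 * n + 1) x).
Proof. move=> H1 E H2 x Hx /=. have Hn : 1 <= n by lia. crush Hn. Qed.

Lemma case1b m : 7 <= m -> forall x, 1 <= x <= m ->
  foldl (fun x j => cross 3 j x) x [:: 5]
  = swapn 3 3 (swapn (2 * 3 - 1) (2 * 3 + 1) x).
Proof. move=> H2 x Hx /=. have Hn : 1 <= 3 by lia. crush Hn. Qed.

Theorem lemma4p2 (n m : nat) :
  3 <= n -> odd n -> 5 * n - 1 <= 2 * m ->
  (forall g : 'S_m,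
     (forall i : 'I_m, (g i).+1 = swapn 3 n (swapn (2 * n - 1) (2 * n + 1) i.+1)) ->
     prod_of_crossings m n g) /\
  (forall g : 'S_m,
     (forall i : 'I_m, (g i).+1 = swapn 2 (n + 1) (swapn (2 * n) (2 * n + 2) i.+1)) ->
     prod_of_crossings m n g).
Proof.
move=> H3 Hodd Hm.
have Ht := odd_double_half n; rewrite Hodd -muln2 in Ht.
set t := n./2 in Ht.
split => g Hg.
  have [E3|Ebig] : n = 3 \/ 2 <= t by lia.
    rewrite E3; rewrite E3 in Hg.
    apply: (@word_prod m 3 [:: 5]); first by lia.
      by rewrite /= andbT; lia.
    move=> i; have Hi := ltn_ord i; rewrite Hg (@case1b m) //; lia.
  apply: (@word_prod m n [:: t+2; 3; n+2; 4; 5; 4; n+2; t+2]); first by lia.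
    by rewrite /=; repeat (apply/andP; split); lia.
  move=> i; have Hi := ltn_ord i; rewrite Hg (@case1 t n m) //; lia.
have H2n : 2 * n + 2 <= m.
  have Hi : 2 * n - 1 < m by lia.
  move: (Hg (Ordinal Hi)) (ltn_ord (g (Ordinal Hi))) => /=.
  have Hn : 1 <= n by lia.
  crush Hn.
apply: (@word_prod m n [:: 1; n; n-1; n; 1; n+2; n+3; n+2]); first by lia.
  by rewrite /=; repeat (apply/andP; split); lia.
move=> i; have Hi := ltn_ord i; rewrite Hg (@case2 n (n-1) m) //; lia.
Qed.
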